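(* Let $\Sigma$ be a finite alphabet with at least two symbols and $z\in\{B,A\}$. The set of isolated points of $(\Sigma^{\mathbb{N}},\tau_z)$ is exactly the set $\mathrm{Ult}$ of ultimately periodic words, and $\mathrm{Ult}$ is dense in $(\Sigma^{\mathbb{N}},\tau_z)$; consequently a subset of $(\Sigma^{\mathbb{N}},\tau_z)$ is dense if and only if it contains $\mathrm{Ult}$.
   Context: $\mathrm{Ult}=\{u\cdot v^\omega: u,v\in\Sigma^*, v\neq\emptyset\}$, the ultimately periodic infinite words. A language $L\subseteq\Sigma^{\mathbb{N}}$ is $\omega$-regular if accepted by a Büchi automaton $(\Sigma,Q,Q_i,Q_f,\delta)$ (a run on $\sigma$ is $(q_n)_n$ with $q_0\in Q_i$, $(q_n,\sigma(n),q_{n+1})\in\delta$; accepting iff $q_n\in Q_f$ for infinitely many $n$). $\tau_C$ is the Cantor topology on $\Sigma^{\mathbb{N}}$; $\tau_B$ is generated by the $\omega$-regular languages; $\tau_A$ is generated by the $\tau_C$-closed $\omega$-regular languages. A point $x$ is isolated if $\{x\}$ is open. *)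

(* Defs.v *)
From mathcomp Require Import all_boot.
Set Implicit Arguments. Unset Strict Implicit. Unset Printing Implicit Defensive.

Definition word (S : finType) := nat -> S.
Definition lang (S : finType) := word S -> Prop.

(* Ult = { u v^omega : u, v finite words, v nonempty } *)
Definition Ult (S : finType) : lang S := fun x =>
  exists (u v : seq S), v <> [::] /\
    forall n, x n = if n < size u then nth (x n) u n
                    else nth (x n) v ((n - size u) %% size v).

Record buchi (S : finType) := Buchi {
  bstate : finType;
  binit : {set bstate};
  bfinal : {set bstate};
  bdelta : bstate -> S -> bstate -> bool }.

Definition buchi_run (S : finType) (B : buchi S) (s : word S) (r : nat -> bstate B) :=
  r 0 \in @binit S B /\ forall n, @bdelta S B (r n) (s n) (r n.+1).

Definition buchi_accepts (S : finType) (B : buchi S) (s : word S) :=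
  exists r : nat -> bstate B, @buchi_run S B s r /\ forall N, exists2 n, N <= n & r n \in @bfinal S B.

Definition omega_regular (S : finType) (L : lang S) :=
  exists B : buchi S, forall s, L s <-> buchi_accepts B s.

Definition cantor_open (S : finType) (U : lang S) :=
  forall x, U x -> exists N, forall y, (forall i, i < N -> y i = x i) -> U y.
Definition cantor_closed (S : finType) (L : lang S) :=
  cantor_open (fun x => ~ L x).

Inductive gen_open (S : finType) (G : lang S -> Prop) : lang S -> Prop :=
  | go_gen U : G U -> gen_open G U
  | go_full : gen_open G (fun _ => True)
  | go_inter U V : gen_open G U -> gen_open G V ->
                   gen_open G (fun x => U x /\ V x)
  | go_union (I : Type) (F : I -> lang S) :
      (forall i, gen_open G (F i)) -> gen_open G (fun x => exists i, F i x)
  | go_ext U V : (forall x, U x <-> V x) -> gen_open G U -> gen_open G V.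

Inductive topz := zB | zA.

Definition generators (S : finType) (z : topz) : lang S -> Prop :=
  match z with
  | zB => fun L => omega_regular L
  | zA => fun L => omega_regular L /\ cantor_closed L
  end.

Definition tau_open (S : finType) (z : topz) (U : lang S) := gen_open (generators z) U.

Definition isolated (S : finType) (z : topz) (x : word S) :=
  tau_open z (fun y => y = x).

Definition dense (S : finType) (z : topz) (D : lang S) :=
  forall U, tau_open z U -> (exists x, U x) -> exists x, U x /\ D x.

(* Main.v *)
Require Import Defs.
From mathcomp Require Import all_boot zify.
From Stdlib Require Import Classical ClassicalEpsilon FunctionalExtensionality.
Set Implicit Arguments. Unset Strict Implicit. Unset Printing Implicit Defensive.

Lemma modS_cases k p : 0 < p ->
  k.+1 %% p = if (k %% p).+1 < p then (k %% p).+1 else 0.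
Proof.
move=> p0; have hk := divn_eq k p; have hl := ltn_pmod k p0.
have -> : k.+1 = k %/ p * p + (k %% p).+1 by rewrite addnS -hk.
rewrite modnMDl; case: ifP => h; first by rewrite modn_small.
have -> : (k %% p).+1 = p by lia.
by rewrite modnn.
Qed.

Definition posl m n k := if k < m then k else m + (k - m) %% (n - m).

Lemma posl_lt m n k : m < n -> posl m n k < n.
Proof.
move=> mn; rewrite /posl; case: ifP => h; first lia.
have := @ltn_pmod (k - m) (n - m); lia.
Qed.

Lemma posl_succ m n k : m < n ->
  (posl m n k.+1 = (posl m n k).+1) \/ ((posl m n k).+1 = n /\ posl m n k.+1 = m).
Proof.
move=> mn; rewrite /posl.
case: (ltnP k m) => hk.
  left; case: ifP => h //.
  have -> : k.+1 - m = 0 by lia.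
  rewrite mod0n; lia.
have -> : (k.+1 < m) = false by lia.
have -> : k.+1 - m = (k - m).+1 by lia.
have p0 : 0 < n - m by lia.
rewrite (modS_cases _ p0); have := ltn_pmod (k - m) p0.
case: ifP => h hl; [left; lia | right; lia].
Qed.

Definition lasso (S : finType) (x : word S) m n : word S := fun k => x (posl m n k).

Lemma lasso_Ult (S : finType) (x : word S) m n : m < n -> Ult (lasso x m n).
Proof.
move=> mn.
exists [seq x i | i <- iota 0 m], [seq x i | i <- iota m (n - m)].
split.
  case E: (n - m) => [|q]; first lia. by [].
move=> k; rewrite !size_map !size_iota /lasso /posl.
have p0 : 0 < n - m by lia.
case: ifP => hk.
  by rewrite (nth_map 0) ?size_iota // nth_iota.
by rewrite (nth_map 0) ?size_iota ?ltn_pmod // nth_iota ?ltn_pmod.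
Qed.

Lemma recur (Q : finType) (c : nat -> Q) :
  exists q, forall N, exists2 n, N <= n & c n = q.
Proof.
apply NNPP => H.
have H' : forall q, exists N, forall n, N <= n -> c n <> q.
  move=> q; apply NNPP => Hq; apply H; exists q => N; apply NNPP => HN.
  apply Hq; exists N => n hn e; apply HN; by exists n.
pose f q := proj1_sig (constructive_indefinite_description _ (H' q)).
have hf q : forall n, f q <= n -> c n <> q.
  exact: (proj2_sig (constructive_indefinite_description _ (H' q))).
pose M := \max_q f q.
have hM : f (c M) <= M by exact: leq_bigmax.
exact: (hf (c M) M hM erefl).
Qed.
Definition good (S : finType) (U : lang S) := forall x, U x ->
  exists (Q : finType) (c : nat -> Q) (g : nat -> nat),
    forall m n, m < n -> c m = c n -> g m <= n -> U (lasso x m n).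

Lemma omega_good (S : finType) (U : lang S) : omega_regular U -> good U.
Proof.
move=> [B hB] x /hB [r [[r0 rd] fin]].
have ex m : exists n, (m <= n) && (r n \in bfinal B).
  by have [n h1 h2] := fin m; exists n; rewrite h1 h2.
exists (bstate B), r, (fun m => (xchoose (ex m)).+1) => m n mn e hg0.
have /andP [h1' h2'] := xchooseP (ex m).
have [h [h1 h2 hg]] : exists h : nat, [/\ m <= h, r h \in bfinal B & h < n].
  by exists (xchoose (ex m)); split.
clear h1' h2' hg0.
apply/hB; exists (fun k => r (posl m n k)); split; first split.
- have -> : posl m n 0 = 0.
    by rewrite /posl; case: ifP => // h0; rewrite sub0n mod0n addn0; lia.
  exact: r0.
- move=> k; rewrite /lasso.
  case: (posl_succ k mn) => [-> | [e1 ->]]; first exact: rd.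
  by have := rd (posl m n k); rewrite e1 -e.
- move=> N; exists (m + N * (n - m) + (h - m)).
    have hp : 0 < n - m by lia.
    have := leq_pmulr N hp; set t := N * (n - m); lia.
  rewrite /posl ifN; last by set t := N * (n - m); lia.
  have -> : m + N * (n - m) + (h - m) - m = N * (n - m) + (h - m).
    by set t := N * (n - m); lia.
  rewrite modnMDl modn_small; last lia.
  by have -> : m + (h - m) = h by lia.
Qed.
Lemma good_open (S : finType) z (U : lang S) : tau_open z U -> good U.
Proof.
elim => {U}.
- move=> U hU; apply: omega_good; by case: z hU => // [[]].
- move=> x _; exists unit, (fun _ => tt), (fun _ => 0) => //.
- move=> U V _ hU _ hV x [/hU [Q1 [c1 [g1 H1]]] /hV [Q2 [c2 [g2 H2]]]].
  exists (Q1 * Q2)%type, (fun k => (c1 k, c2 k)), (fun k => maxn (g1 k) (g2 k)).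
  move=> m n mn [e1 e2]; rewrite geq_max => /andP [l1 l2].
  by split; [apply: H1 | apply: H2].
- move=> I F _ IH x [i /IH [Q [c [g H]]]].
  exists Q, c, g => m n mn e l; exists i; exact: H.
- move=> U V hUV _ IH x /hUV /IH [Q [c [g H]]].
  exists Q, c, g => m n mn e l; apply/hUV; exact: H.
Qed.

Lemma dense_Ult (S : finType) z : dense z (@Ult S).
Proof.
move=> U hU [x hx]; have [Q [c [g H]]] := good_open hU hx.
have [q hq] := recur c.
have [m _ cm] := hq 0.
have [n hn cn] := hq (maxn (g m) m.+1).
move: hn; rewrite geq_max => /andP [l1 l2].
exists (lasso x m n); split; first by apply: H => //; rewrite cm cn.
exact: lasso_Ult.
Qed.

Lemma Ult_posl (S : finType) (x : word S) :
  Ult x -> exists m p, 0 < p /\ forall k, x k = x (posl m (m + p) k).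
Proof.
move=> [u [v [hv hx]]]; exists (size u), (size v); split.
  by case: v hv {hx}.
have p0 : 0 < size v by case: v hv {hx}.
move=> k; rewrite /posl; case: ifP => // hk.
have -> : size u + size v - size u = size v by lia.
rewrite (hx (size u + _)) ifN; last lia.
rewrite hx hk addKn (modn_small (ltn_pmod _ p0)).
by apply: set_nth_default; rewrite ltn_pmod.
Qed.
Lemma Ult_omega (S : finType) (x : word S) : Ult x -> omega_regular (fun y => y = x).
Proof.
move=> /Ult_posl [m [p [p0 hx]]].
set K := m + p.
have mK : m < K by rewrite /K; lia.
pose nxt (k : nat) := if k.+1 < K then k.+1 else m.
pose B := @Buchi S 'I_K [set k : 'I_K | val k == 0] setT
  (fun k a k' => (a == x k) && (val k' == nxt k)).
have hsucc k : posl m K k.+1 = nxt (posl m K k).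
  rewrite /nxt; case: (posl_succ k mK) => [e | [e1 e2]].
    by rewrite -e ifT // posl_lt.
  by rewrite e1 ltnn e2.
have h0 : posl m K 0 = 0.
  by rewrite /posl; case: ifP => // h0; rewrite sub0n mod0n addn0; lia.
exists B => s; split.
- move=> ->; exists (fun k => Ordinal (posl_lt k mK)); split; first split.
  + by rewrite inE /= h0.
  + move=> n /=; by rewrite -hx hsucc !eqxx.
  + by move=> N; exists N; rewrite ?inE.
- move=> [r [[r0 rd] _]].
  have hr : forall k, val (r k) = posl m K k.
    elim => [|k IH]; first by move: r0; rewrite inE h0 => /eqP.
    by have /andP [_ /eqP ->] := rd k; rewrite hsucc IH.
  apply: functional_extensionality => k.
  by have /andP [/eqP -> _] := rd k; rewrite hr -hx.
Qed.

Lemma Ult_isolated (S : finType) z (x : word S) : Ult x -> isolated z x.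
Proof.
move=> hx; apply: go_gen; have ho := Ult_omega hx.
case: z => //=; split => // y hy.
have [i hi] : exists i, y i <> x i.
  apply NNPP => H; apply: hy; apply: functional_extensionality => i.
  by apply NNPP => Hi; apply: H; exists i.
exists i.+1 => y' hy' e; apply: hi; by rewrite -(hy' i (ltnSn i)) e.
Qed.

Theorem mainTheorem14 (S : finType) (z : topz) (hS : 1 < #|S|) :
  (forall x : word S, isolated z x <-> Ult x) /\
  dense z (@Ult S) /\
  (forall D : lang S, dense z D <-> (forall x, Ult x -> D x)).
Proof.
split; [|split; first exact: dense_Ult].
- move=> x; split; last exact: Ult_isolated.
  move=> hI; have [y [-> hy]] := dense_Ult hI (ex_intro _ x erefl); exact: hy.
- move=> D; split.
    move=> hD x hx; have [y [-> hy]] := hD _ (Ult_isolated z hx) (ex_intro _ x erefl).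
    exact: hy.
  move=> hD U hU hne; have [y [hy hu]] := dense_Ult hU hne.
  by exists y; split => //; apply: hD.
Qed.
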